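(* For all integers $n\ge0$ and $m>nt$, $\mathcal{L}^{(t)}_T\big(T^{(t)}_m(x)\,T^{(t)}_n(x)\big)=0$; and for all $n\ge1$, $\mathcal{L}^{(t)}_T\big(T^{(t)}_{nt}(x)\,T^{(t)}_n(x)\big)=t+1$.
   Context: Fix an integer $t\ge1$. For $n\ge1$ let $C_n$ be the $n$-cycle with vertices $1,\dots,n$ (indices mod $n$). If $n\ge t+1$, the $t$-paths in $C_n$ are the $n$ sequences $(i,i+1,\dots,i+t)$ mod $n$, $i=1,\dots,n$; if $n\le t$ there are none. Define $T^{(t)}_n(x)=\sum_F(-1)^{|F|}x^{\,n-(t+1)|F|}$ over all families $F$ of $t$-paths in $C_n$ with pairwise disjoint vertex sets, $T^{(t)}_0=1$. Let $\mathcal{L}^{(t)}_T$ be the linear functional on polynomials with $\mathcal{L}^{(t)}_T(x^{(t+1)j})=\binom{(t+1)j}{j}$ for $j\ge0$ and $\mathcal{L}^{(t)}_T(x^m)=0$ if $t+1\nmid m$. *)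

(* Defs.v *)
From HB Require Import structures.
From mathcomp Require Import all_boot all_order all_algebra.
Set Implicit Arguments. Unset Strict Implicit. Unset Printing Implicit Defensive.
Import Order.TTheory GRing.Theory Num.Theory.

(* Vertices of C_n are 'I_n = {0,..,n-1} (relabelling 1..n, indices mod n).
   The t-path starting at i is (i, i+1, ..., i+t) mod n; its vertex set is
   { j | (j - i) mod n <= t }. *)
Definition tpath_verts (n t : nat) (i : 'I_n) : {set 'I_n} :=
  [set j : 'I_n | (j + n - i) %% n <= t].

(* A family of t-paths is given by the set of starting vertices; t-paths exist
   only when n >= t+1; the paths must have pairwise disjoint vertex sets. *)
Definition tfamily (n t : nat) (F : {set 'I_n}) : bool :=
  ((t < n) || (F == set0)) &&
  [forall i in F, forall j in F,
      (i != j) ==> [disjoint tpath_verts t i & tpath_verts t j]].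

Local Open Scope ring_scope.

Definition Tpoly (t n : nat) : {poly int} :=
  \sum_(F : {set 'I_n} | tfamily t F)
     ((-1) ^+ #|F|) *: 'X^(n - t.+1 * #|F|)%N.

Definition LT (t : nat) (p : {poly int}) : int :=
  \sum_(i < size p)
     p`_i * (if (t.+1 %| i)%N then ('C(i, i %/ t.+1))%:Z else 0).

(* Main.v *)
Require Import Defs.
From HB Require Import structures.
From mathcomp Require Import all_boot all_order all_algebra.
From Stdlib Require Import Lia.
Import GRing.Theory.
Local Open Scope ring_scope.

Import Num.Theory.
Set Implicit Arguments. Unset Strict Implicit. Unset Printing Implicit Defensive.


Definition zs (m s : nat) : 'I_m.+1 := inZp s.

Lemma val_zs m s : val (zs m s) = (s %% m.+1)%N. Proof. by []. Qed.

Lemma zsD m a b : zs m (a + b) = zs m a + zs m b.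
Proof. by apply: val_inj; rewrite /= modnDm. Qed.

Lemma zs_val m (x : 'I_m.+1) : zs m (val x) = x.
Proof. exact: valZpK. Qed.

Lemma valB m (x y : 'I_m.+1) : val (x - y) = ((x + m.+1 - y) %% m.+1)%N.
Proof.
rewrite /= modnDmr addnBA //; exact: ltnW (ltn_ord y).
Qed.

Lemma valB_le m (x y : 'I_m.+1) : (y <= x)%N -> val (x - y) = (x - y)%N.
Proof.
move=> le; rewrite valB -addnBAC // modnDr modn_small //.
exact: leq_ltn_trans (leq_subr _ _) (ltn_ord x).
Qed.

Lemma inW m t (i j : 'I_m.+1) : (j \in tpath_verts t i) = (val (j - i)%R <= t)%N.
Proof. by rewrite inE valB. Qed.

Lemma W_self m t (i : 'I_m.+1) : i \in tpath_verts t i.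
Proof. by rewrite inW subrr. Qed.

Lemma W_shift m t (i : 'I_m.+1) s : (s <= t)%N -> i + zs m s \in tpath_verts t i.
Proof.
move=> st; rewrite inW (addrC i) addrK val_zs.
exact: leq_trans (leq_mod _ _) st.
Qed.

Lemma W_decomp m (i j : 'I_m.+1) : j = i + zs m (val (j - i)).
Proof. by rewrite zs_val addrC subrK. Qed.

Lemma W_meet m t (i j v : 'I_m.+1) :
  v \in tpath_verts t i -> v \in tpath_verts t j ->
  (i \in tpath_verts t j) || (j \in tpath_verts t i).
Proof.
rewrite !inW => hi hj.
have E1 : i - j = (v - j) - (v - i) by rewrite opprB [RHS]addrC addrA subrK.
have E2 : j - i = (v - i) - (v - j) by rewrite opprB [RHS]addrC addrA subrK.
case: (leqP (val (v - i)%R) (val (v - j)%R)) => h.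
  by apply/orP; left; rewrite E1 valB_le // (leq_trans (leq_subr _ _) hj).
by apply/orP; right; rewrite E2 valB_le ?(ltnW h) // (leq_trans (leq_subr _ _) hi).
Qed.

Definition tcover m t (F : {set 'I_m.+1}) : {set 'I_m.+1} :=
  \bigcup_(i in F) tpath_verts t i.

Lemma tcoverP m t (F : {set 'I_m.+1}) v :
  reflect (exists2 i, i \in F & v \in tpath_verts t i) (v \in tcover t F).
Proof. exact: bigcupP. Qed.

Lemma tfamP m t (F : {set 'I_m.+1}) i j :
  tfamily t F -> i \in F -> j \in F -> i != j ->
  [disjoint tpath_verts t i & tpath_verts t j].
Proof.
move=> /andP[_ /forallP H] hi hj nij.
by move: (H i); rewrite hi /= => /forallP /(_ j); rewrite hj nij.
Qed.

Lemma tfam_lt m t (F : {set 'I_m.+1}) : tfamily t F -> F != set0 -> (t < m.+1)%N.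
Proof. by case/andP => /orP[//|/eqP->]; rewrite eqxx. Qed.

Lemma disjW m (A B : {set 'I_m.+1}) v :
  [disjoint A & B] -> v \in A -> v \in B -> False.
Proof. by move=> /disjoint_setI0 E vA vB; move/setP: E => /(_ v); rewrite !inE vA vB. Qed.

Lemma card_tcover m t (F : {set 'I_m.+1}) :
  tfamily t F -> #|tcover t F| = (t.+1 * #|F|)%N.
Proof.
move=> hF; have [->|F0] := eqVneq F set0.
  by rewrite cards0 muln0 /tcover big_set0 cards0.
have ltM := tfam_lt hF F0.
pose f (p : 'I_m.+1 * 'I_t.+1) := p.1 + zs m (val p.2).
have -> : tcover t F = [set f p | p in setX F [set: 'I_t.+1]].
  apply/setP => v; apply/tcoverP/imsetP.
    case=> i iF vi.
    have h : (val (v - i)%R < t.+1)%N by rewrite ltnS -inW.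
    exists (i, Ordinal h).
      by rewrite !inE iF.
    by rewrite /f /= -W_decomp.
  case=> [[i s]]; rewrite !inE /= andbT => iF ->; exists i => //.
  by rewrite /f /= W_shift // -ltnS.
rewrite card_in_imset ?cardsX ?cardsT ?card_ord 1?mulnC //.
move=> [i s] [j s']; rewrite !inE /= !andbT /f /= => iF jF E.
have [eij|nij] := eqVneq i j.
  subst j; move/addrI: E => /(congr1 val); rewrite !val_zs !modn_small //.
    by move=> E; congr pair; apply: val_inj.
  - exact: leq_trans (ltn_ord s') ltM.
  - exact: leq_trans (ltn_ord s) ltM.
exfalso; apply: (disjW (tfamP hF iF jF nij) (v := i + zs m s)).
  by rewrite W_shift // -ltnS.
by rewrite E W_shift // -ltnS.
Qed.


Definition pat m t (F D : {set 'I_m.+1}) (i : 'I_m.+1) : bool :=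
  [&& (t < m.+1)%N, [disjoint tpath_verts t i & tcover t F] &
      (tpath_verts t i :&: D == [set i])].

Definition valid m t (FD : {set 'I_m.+1} * {set 'I_m.+1}) : bool :=
  tfamily t FD.1 && [disjoint FD.2 & tcover t FD.1].

Definition blocks m t (FD : {set 'I_m.+1} * {set 'I_m.+1}) : {set 'I_m.+1} :=
  FD.1 :|: [set i | pat t FD.1 FD.2 i].

Definition tog m (i : 'I_m.+1) (FD : {set 'I_m.+1} * {set 'I_m.+1}) :=
  if i \in FD.1 then (FD.1 :\ i, i |: FD.2) else (i |: FD.1, FD.2 :\ i).

Lemma setI1P (T : finType) (A : {set T}) i :
  reflect (i \in A /\ forall j, j \in A -> j = i) (A == [set i]).
Proof.
apply: (iffP eqP) => [EA|[iA H]].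
  by rewrite EA set11; split=> // j; rewrite in_set1 => /eqP.
apply/setP => j; rewrite in_set1; apply/idP/idP => [/H ->//|/eqP -> //].
Qed.

Lemma patP m t (F D : {set 'I_m.+1}) i :
  reflect [/\ (t < m.+1)%N, (forall v, v \in tpath_verts t i -> v \notin tcover t F),
     i \in D & (forall v, v \in tpath_verts t i -> v \in D -> v = i)]
    (pat t F D i).
Proof.
apply: (iffP and3P) => [[h1 h2 /setI1P[]]|[h1 h2 h3 h4]].
  rewrite in_setI => /andP[_ iD] H; split=> // [v vi|v vi vD].
    by apply/negP => vc; apply: disjW h2 vi vc.
  by apply: H; rewrite in_setI vi.
split=> //.
  by rewrite disjoint_subset; apply/subsetP => v vi; rewrite inE h2.
apply/setI1P; split; first by rewrite in_setI W_self.
by move=> v; rewrite in_setI => /andP[]; apply: h4.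
Qed.

Lemma coverU1 m t (F : {set 'I_m.+1}) i v :
  (v \in tcover t (i |: F)) = (v \in tpath_verts t i) || (v \in tcover t F).
Proof.
apply/tcoverP/orP => [[j]|[vi|/tcoverP[j jF vj]]].
- rewrite in_setU1 => /orP[/eqP -> vj|jF vj]; first by left.
  by right; apply/tcoverP; exists j.
- by exists i; rewrite ?in_setU1 ?eqxx.
- by exists j; rewrite // in_setU1 jF orbT.
Qed.

Lemma coverD1 m t (F : {set 'I_m.+1}) i v : tfamily t F -> i \in F ->
  (v \in tcover t (F :\ i)) = (v \notin tpath_verts t i) && (v \in tcover t F).
Proof.
move=> hF iF; apply/tcoverP/andP => [[j]|[vi /tcoverP[j jF vj]]].
  rewrite in_setD1 => /andP[ji jF] vj; split; last by apply/tcoverP; exists j.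
  by apply/negP => vi; apply: disjW (tfamP hF jF iF ji) vj vi.
exists j => //; rewrite in_setD1 jF andbT; apply/negP => /eqP E; subst j.
by rewrite vj in vi.
Qed.

Lemma cover_sub m t (F : {set 'I_m.+1}) i v : i \in F ->
  v \in tpath_verts t i -> v \in tcover t F.
Proof. by move=> iF vi; apply/tcoverP; exists i. Qed.

Lemma valid_split m t (FD : {set 'I_m.+1} * {set 'I_m.+1}) :
  valid t FD -> tfamily t FD.1 /\ (forall v, v \in FD.2 -> v \notin tcover t FD.1).
Proof.
case/andP => h1 h2; split=> // v vD; apply/negP => vc; exact: disjW h2 vD vc.
Qed.

Lemma validI m t (F D : {set 'I_m.+1}) :
  tfamily t F -> (forall v, v \in D -> v \notin tcover t F) -> valid t (F, D).
Proof.
move=> h1 h2; rewrite /valid h1 /= disjoint_subset; apply/subsetP => v vD.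
by rewrite inE h2.
Qed.

Lemma in_blocks m t (F D : {set 'I_m.+1}) j :
  (j \in blocks t (F, D)) = (j \in F) || pat t F D j.
Proof. by rewrite /blocks in_setU in_set. Qed.

Lemma tog_path m t (F D : {set 'I_m.+1}) i :
  valid t (F, D) -> i \in F ->
  [/\ valid t (F :\ i, i |: D), blocks t (F :\ i, i |: D) = blocks t (F, D),
      #|F| = #|F :\ i|.+1 & #|i |: D| = #|D|.+1 /\ i \notin D].
Proof.
move=> /valid_split[hF hD] iF.
have ltM : (t < m.+1)%N by apply: (tfam_lt hF); apply/set0Pn; exists i.
have iD : i \notin D by apply/negP => /hD; rewrite (cover_sub iF (W_self _ _)).
have hF' : tfamily t (F :\ i).
  rewrite /tfamily ltM /=; apply/forallP => a; apply/implyP; rewrite in_setD1 => /andP[_ aF].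
  apply/forallP => b; apply/implyP; rewrite in_setD1 => /andP[_ bF]; apply/implyP => ab.
  exact: tfamP hF aF bF ab.
have Wi v : v \in tpath_verts t i -> v \in D -> False.
  by move=> vi vD; move: (hD v vD); rewrite (cover_sub iF vi).
split.
- apply: validI => // v; rewrite in_setU1 => /orP[/eqP->|vD].
    by rewrite coverD1 // W_self.
  by rewrite coverD1 // negb_and (hD v vD) orbT.
- apply/setP => j; rewrite !in_blocks in_setD1.
  have [->|ji] := eqVneq j i.
    rewrite iF /=; apply/patP; split; [done|move=> v vi|by rewrite setU11|move=> v vi].
      by rewrite coverD1 // vi.
    by rewrite in_setU1 => /orP[/eqP //|/(Wi v vi)].
  rewrite /= ; case jF: (j \in F) => //=.
  apply/patP/patP => [[_ h2 h3 h4]|[_ h2 h3 h4]].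
    have jD : j \in D by move: h3; rewrite in_setU1 (negPf ji).
    have ij : i \notin tpath_verts t j.
      apply/negP => ij; move: (h4 i ij); rewrite in_setU1 eqxx => /(_ isT) /eqP.
      by rewrite eq_sym (negPf ji).
    split=> // [v vj|v vj vD]; last by apply: h4; rewrite // in_setU1 vD orbT.
    apply/negP => /tcoverP[k kF vk].
    have [ki|nki] := eqVneq k i.
      subst k; case/orP: (W_meet vj vk) => [ji'|ij']; first exact: Wi ji' jD.
      by rewrite ij' in ij.
    have vi : v \notin tpath_verts t i.
      by apply/negP => vi; apply: disjW (tfamP hF kF iF nki) vk vi.
    by move: (h2 v vj); rewrite coverD1 // vi (cover_sub kF vk).
  have ij : i \notin tpath_verts t j.
    by apply/negP => ij; move: (h2 i ij); rewrite (cover_sub iF (W_self _ _)).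
  split; [done|move=> v vj| |move=> v vj].
  + by rewrite coverD1 // negb_and (h2 v vj) orbT.
  + by rewrite in_setU1 h3 orbT.
  + rewrite in_setU1 => /orP[/eqP E|]; [by subst v; rewrite vj in ij|exact: h4].
- by rewrite (cardsD1 i F) iF.
- by rewrite cardsU1 iD.
Qed.

Lemma tog_pat m t (F D : {set 'I_m.+1}) i :
  valid t (F, D) -> i \notin F -> pat t F D i ->
  [/\ valid t (i |: F, D :\ i), blocks t (i |: F, D :\ i) = blocks t (F, D),
      #|i |: F| = #|F|.+1 & #|D| = #|D :\ i|.+1 /\ i \in D].
Proof.
move=> /valid_split[hF hD] iF ipat; move: (ipat) => /patP[ltM h2 iD h4].
have hF' : tfamily t (i |: F).
  rewrite /tfamily ltM /=; apply/forallP => a; apply/implyP; rewrite in_setU1 => aF.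
  apply/forallP => b; apply/implyP; rewrite in_setU1 => bF; apply/implyP => ab.
  case/orP: aF => [/eqP ea|aF]; case/orP: bF => [/eqP eb|bF].
  - by rewrite ea eb eqxx in ab.
  - subst a; rewrite disjoint_subset; apply/subsetP => v vi; rewrite inE.
    by apply/negP => vb; move: (h2 v vi); rewrite (cover_sub bF vb).
  - subst b; rewrite disjoint_sym disjoint_subset; apply/subsetP => v vi; rewrite inE.
    by apply/negP => va; move: (h2 v vi); rewrite (cover_sub aF va).
  - exact: tfamP hF aF bF ab.
split.
- apply: validI => // v; rewrite in_setD1 => /andP[vi vD]; rewrite coverU1 negb_or hD // andbT.
  by apply/negP => /h4 /(_ vD) /eqP; rewrite (negPf vi).
- apply/setP => j; rewrite !in_blocks in_setU1.
  have [->|ji] := eqVneq j i; first by rewrite ipat orbT.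
  rewrite /= ; case jF: (j \in F) => //=.
  apply/patP/patP => [[_ h2' h3 h4']|[_ h2' h3 h4']].
    have ij : i \notin tpath_verts t j.
      by apply/negP => ij; move: (h2' i ij); rewrite coverU1 W_self.
    split=> // [v vj||v vj vD].
    + by move: (h2' v vj); rewrite coverU1 negb_or => /andP[].
    + by move: h3; rewrite in_setD1 => /andP[].
    + apply: h4' => //; rewrite in_setD1 vD andbT; apply/negP => /eqP E.
      by subst v; rewrite vj in ij.
  have jD : j \in D by [].
  split; [done|move=> v vj| |move=> v vj].
  + rewrite coverU1 negb_or h2' // andbT; apply/negP => vi.
    case/orP: (W_meet vj vi) => [ji'|ij].
      by move: (h4 j ji' jD) => /eqP; rewrite (negPf ji).
    by move: (h4' i ij iD) => /eqP; rewrite eq_sym (negPf ji).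
  + by rewrite in_setD1 jD andbT.
  + by rewrite in_setD1 => /andP[_]; apply: h4'.
- by rewrite cardsU1 iF.
- by rewrite (cardsD1 i D) iD.
Qed.


Lemma invol_sum (T : finType) (P : pred T) (f : T -> T) (w : T -> int) :
  (forall x, P x -> P (f x)) -> (forall x, P x -> f (f x) = x) ->
  (forall x, P x -> f x != x -> w (f x) = - w x) ->
  \sum_(x | P x) w x = \sum_(x | P x && (f x == x)) w x.
Proof.
move=> hP hff hw; rewrite (bigID (fun x => f x == x)) /=.
set S := \sum_(x | P x && (f x != x)) w x.
suff -> : S = 0 by rewrite addr0.
have key x : P (f x) && (f (f x) != f x) && (f (f x) == x) = P x && (f x != x).
  apply/idP/idP.
    case/andP=> /andP[pfx ne] /eqP ffx.
    have px : P x by rewrite -ffx hP.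
    by rewrite px /=; move: ne; rewrite ffx eq_sym.
  by case/andP => px ne; rewrite hP // hff // eqxx andbT /= eq_sym.
have E : S = - S.
  rewrite {1}/S (reindex_onto f f (P := fun x => P x && (f x != x))); last first.
    by move=> x /andP[px _]; apply: hff.
  rewrite /S -sumrN; apply: eq_big => x; first exact: key.
  by rewrite key => /andP[px ne]; apply: hw.
have : S *+ 2 == 0 by rewrite mulr2n {1}E addNr.
by rewrite mulrn_eq0 /= => /eqP.
Qed.

Definition inv m t (FD : {set 'I_m.+1} * {set 'I_m.+1}) :=
  if [pick i in blocks t FD] is Some i then tog i FD else FD.

Definition nopat m t (D : {set 'I_m.+1}) := [forall i, ~~ pat t set0 D i].

Lemma tog_ok m t (FD : {set 'I_m.+1} * {set 'I_m.+1}) i (g : nat -> int) :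
  valid t FD -> i \in blocks t FD ->
  [/\ valid t (tog i FD), blocks t (tog i FD) = blocks t FD, tog i (tog i FD) = FD,
      tog i FD != FD &
      (-1) ^+ #|(tog i FD).1| * g (#|(tog i FD).1| + #|(tog i FD).2|)%N =
      - ((-1) ^+ #|FD.1| * g (#|FD.1| + #|FD.2|)%N)].
Proof.
case: FD => F D hv; rewrite /tog /=.
case iF: (i \in F) => /=.
  case: (tog_path hv iF) => h1 h2 h3 [h4 h5]; split=> //.
  - by rewrite in_setD1 eqxx /= setD1K // setU1K.
  - by apply/eqP => -[E _]; move: iF; rewrite -E in_setD1 eqxx.
  - by rewrite h3 h4 addSn addnS exprS mulN1r mulNr opprK.
rewrite in_blocks iF /= => ip.
have iF' : i \notin F by rewrite iF.
case: (tog_pat hv iF' ip) => h1 h2 h3 [h4 h5]; split=> //.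
- by rewrite setU11 setU1K // setD1K.
- by apply/eqP => -[E _]; move: iF; rewrite -E setU11.
- by rewrite h3 h4 addSn addnS exprS mulN1r mulNr.
Qed.

Lemma inv_valid m t (FD : {set 'I_m.+1} * {set 'I_m.+1}) :
  valid t FD -> valid t (inv t FD).
Proof.
move=> hv; rewrite /inv; case: pickP => [i ib|//].
by case: (tog_ok (fun _ => 0) hv ib).
Qed.

Lemma pick_blocks m t (FD : {set 'I_m.+1} * {set 'I_m.+1}) i :
  [pick j in blocks t FD] = Some i -> i \in blocks t FD.
Proof. by case: pickP => // j jb [<-]. Qed.

Lemma inv_inv m t (FD : {set 'I_m.+1} * {set 'I_m.+1}) :
  valid t FD -> inv t (inv t FD) = FD.
Proof.
move=> hv; rewrite /inv.
case E: [pick i in blocks t FD] => [i|]; last by rewrite E.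
case: (tog_ok (fun _ => 0) hv (pick_blocks E)) => _ hb ht _ _.
by rewrite hb E.
Qed.

Lemma inv_w m t (FD : {set 'I_m.+1} * {set 'I_m.+1}) (g : nat -> int) :
  valid t FD -> inv t FD != FD ->
  (-1) ^+ #|(inv t FD).1| * g (#|(inv t FD).1| + #|(inv t FD).2|)%N =
      - ((-1) ^+ #|FD.1| * g (#|FD.1| + #|FD.2|)%N).
Proof.
move=> hv; rewrite /inv.
case E: [pick i in blocks t FD] => [i|]; last by rewrite eqxx.
by case: (tog_ok g hv (pick_blocks E)).
Qed.

Lemma inv_fixed m t (FD : {set 'I_m.+1} * {set 'I_m.+1}) :
  valid t FD -> (inv t FD == FD) = (FD.1 == set0) && nopat t FD.2.
Proof.
move=> hv; rewrite /inv.
case E: [pick i in blocks t FD] => [i|].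
  case: (tog_ok (fun _ => 0) hv (pick_blocks E)) => _ _ _ /negPf -> _.
  apply/esym/negP => /andP[/eqP F0 /forallP np].
  move: (pick_blocks E); case: FD hv E F0 np => F D /= _ _ -> np.
  by rewrite in_blocks inE /= (negPf (np i)).
rewrite eqxx; apply/esym; move: E; case: pickP => // H _.
case: FD hv H => F D hv H /=.
have F0 : F == set0.
  by apply/eqP/setP => j; move: (H j); rewrite in_blocks inE => /norP[/negPf-> _].
rewrite F0 /=; apply/forallP => j; move: (H j).
by rewrite in_blocks (eqP F0) in_set0 /= => ->.
Qed.

Lemma sum_FD m t (g : nat -> int) :
  \sum_(FD : {set 'I_m.+1} * {set 'I_m.+1} | valid t FD) (-1) ^+ #|FD.1| * g (#|FD.1| + #|FD.2|)%N =
  \sum_(D : {set 'I_m.+1} | nopat t D) g #|D|.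
Proof.
rewrite (invol_sum (f := inv t)); last first.
- by move=> x hv; apply: inv_w.
- exact: inv_inv.
- exact: inv_valid.
transitivity (\sum_(FD : {set 'I_m.+1} * {set 'I_m.+1} | (FD.1 == set0) && nopat t FD.2)
               (-1) ^+ #|FD.1| * g (#|FD.1| + #|FD.2|)%N).
  apply: eq_bigl => FD; case hv: (valid t FD) => /=; first by rewrite inv_fixed.
  apply/esym/negbTE; apply: contraFN hv => /andP[/eqP F0 _].
  case: FD F0 => F D /= ->; apply: validI; first by rewrite /tfamily eqxx orbT /=; apply/forallP => i; rewrite in_set0.
  by move=> v _; rewrite /tcover big_set0 in_set0.
rewrite -(pair_big_dep (fun F => F == set0) (fun _ D => nopat t D)
   (fun F D => (-1) ^+ #|F| * g (#|F| + #|D|)%N)) /=.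
rewrite (big_pred1 set0) //; apply: eq_bigr => D _.
by rewrite cards0 expr0 mul1r add0n.
Qed.


Lemma zs0 m : zs m 0 = 0.
Proof. by apply: val_inj; rewrite /= mod0n. Qed.

Lemma cover0 m t : tcover t (set0 : {set 'I_m.+1}) = set0.
Proof. by rewrite /tcover big_set0. Qed.

Lemma nopat_cov m t (D : {set 'I_m.+1}) v :
  (0 < t)%N -> (t < m.+1)%N -> nopat t D -> D != set0 -> v \notin D ->
  exists2 s, (0 < s < t)%N & v - zs m s \in D.
Proof.
move=> t0 ltM /forallP np /set0Pn[u uD] vD.
case: (boolP [exists s : 'I_t, (0 < val s)%N && (v - zs m s \in D)]).
  by case/existsP => s /andP[s0 sD]; exists s => //; rewrite s0 ltn_ord.
move/existsPn => H.
have H' s : (0 < s < t)%N -> v - zs m s \notin D.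
  case/andP => s0 st; move: (H (Ordinal st)); rewrite /= s0 /=; exact.
have claim r : forall s, (s <= r)%N -> v - zs m s \notin D.
  elim: r => [|r IH] s.
    by rewrite leqn0 => /eqP->; rewrite zs0 subr0.
  rewrite leq_eqVlt => /orP[/eqP->|]; last by rewrite ltnS; apply: IH.
  case: (ltnP r.+1 t) => [lt|ge]; first by apply: H'; rewrite lt.
  apply/negP => pD; move: (np (v - zs m r.+1)) => /negP; apply; apply/patP.
  split=> // [w _|w wp wD]; first by rewrite cover0 in_set0.
  have E := W_decomp (v - zs m r.+1) w.
  set s' := val (w - (v - zs m r.+1)) in E.
  have s't : (s' <= t)%N by rewrite -inW.
  have [s'0|s'pos] := posnP s'; first by rewrite E s'0 zs0 addr0.
  have le : (s' <= r.+1)%N by apply: leq_trans s't ge.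
  have Er : zs m r.+1 = zs m (r.+1 - s') + zs m s' by rewrite -zsD subnK.
  move: wD; rewrite E Er opprD addrA subrK => wD.
  suff : (r.+1 - s' <= r)%N by move/IH; rewrite wD.
  by rewrite leq_subLR -add1n leq_add2r.
move: (claim (val (v - u)) _ (leqnn _)); rewrite zs_val.
by rewrite opprB addrC subrK uD.
Qed.

Definition Sset m t (D : {set 'I_m.+1}) := setX D [set s : 'I_t | (0 < val s)%N].
Definition fS m t (p : 'I_m.+1 * 'I_t) : 'I_m.+1 := p.1 + zs m (val p.2).

Lemma card_pos_ord t : (0 < t)%N -> #|[set s : 'I_t | (0 < val s)%N]| = t.-1.
Proof.
case: t => // t _.
have E : ~: [set s : 'I_t.+1 | (0 < val s)%N] = [set ord0].
  by apply/setP => s; rewrite !inE lt0n negbK.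
by have := cardsC [set s : 'I_t.+1 | (0 < val s)%N]; rewrite E cards1 card_ord addn1 => -[].
Qed.

Lemma card_Sset m t (D : {set 'I_m.+1}) : (0 < t)%N -> #|Sset t D| = (#|D| * t.-1)%N.
Proof. by move=> t0; rewrite /Sset cardsX card_pos_ord. Qed.

Lemma compl_sub m t (D : {set 'I_m.+1}) :
  (0 < t)%N -> (t < m.+1)%N -> nopat t D -> D != set0 ->
  ~: D \subset [set fS p | p in Sset t D].
Proof.
move=> t0 ltM np D0; apply/subsetP => v; rewrite inE => vD.
case: (nopat_cov t0 ltM np D0 vD) => s /andP[s0 st] sD.
apply/imsetP; exists (v - zs m s, Ordinal st); first by rewrite !inE sD /= s0.
by rewrite /fS /= subrK.
Qed.

Lemma cardC_ord m (D : {set 'I_m.+1}) : #|~: D| = (m.+1 - #|D|)%N.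
Proof. by rewrite cardsCs setCK card_ord. Qed.

Lemma nopat_bound m t (D : {set 'I_m.+1}) :
  (0 < t)%N -> nopat t D -> D != set0 -> (m.+1 <= t * #|D|)%N.
Proof.
move=> t0 np D0.
have D1 : (0 < #|D|)%N by rewrite card_gt0.
case: (ltnP t m.+1) => [ltM|geM]; last first.
  by apply: leq_trans geM _; rewrite leq_pmulr.
have h1 := subset_leq_card (compl_sub t0 ltM np D0).
have h2 := leq_trans h1 (leq_imset_card _ _).
rewrite card_Sset // cardC_ord in h2.
have hD : (#|D| <= m.+1)%N by rewrite -[X in (_ <= X)%N]card_ord max_card.
rewrite leq_subLR in h2; apply: leq_trans h2 _.
by case: (t) t0 => // t' _; rewrite mulSn mulnC.
Qed.


Lemma nopat_closed m t n (D : {set 'I_m.+1}) p :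
  (0 < t)%N -> m.+1 = (n * t)%N -> nopat t D -> #|D| = n -> p \in D ->
  p + zs m t \in D.
Proof.
move=> t0 EM np cD pD.
case: (ltnP t m.+1) => [ltM|geM]; last first.
  have Et : t = m.+1.
    apply/eqP; rewrite eqn_leq geM EM leq_pmull // lt0n; apply/eqP => n0.
    by move: EM; rewrite n0.
  have -> : zs m t = 0 by apply: val_inj; rewrite /= Et modnn.
  by rewrite addr0.
have D0 : D != set0 by apply/set0Pn; exists p.
have EC : ~: D = [set fS p | p in Sset t D].
  apply/eqP; rewrite eqEcard compl_sub //= cardC_ord.
  apply: leq_trans (leq_imset_card _ _) _; rewrite card_Sset // cD EM.
  by case: (t) t0 => // t' _; rewrite mulnS addKn.
apply/negPn/negP => ptD; move/forallP: np => /(_ p) /negP; apply; apply/patP.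
split=> // [w _|w wp wD]; first by rewrite cover0 in_set0.
have E := W_decomp p w; set s := val (w - p) in E.
have st : (s <= t)%N by rewrite -inW.
have [s0|spos] := posnP s; first by rewrite E s0 zs0 addr0.
move: st; rewrite leq_eqVlt => /orP[/eqP st|st].
  by move: wD; rewrite E st (negPf ptD).
have : w \in ~: D.
  by rewrite EC; apply/imsetP; exists (p, Ordinal st); rewrite // !inE pD /= spos.
by rewrite inE wD.
Qed.

Definition Dset m t (r : nat) : {set 'I_m.+1} := [set i : 'I_m.+1 | ((val i) %% t == r)%N].

Lemma card_Dset m t n r : (0 < t)%N -> m.+1 = (n * t)%N -> (r < t)%N -> #|Dset m t r| = n.
Proof.
move=> t0 EM rt.
have bnd (j : 'I_n) : (r + j * t < m.+1)%N.
  rewrite EM; apply: leq_trans (_ : (j.+1 * t <= n * t)%N); last by rewrite leq_mul2r ltn_ord orbT.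
  by rewrite mulSn ltn_add2r.
pose f (j : 'I_n) : 'I_m.+1 := zs m (r + j * t).
have -> : Dset m t r = [set f j | j in [set: 'I_n]].
  apply/setP => i; rewrite inE; apply/idP/imsetP => [/eqP ir|[j _ ->]].
    have jn : (i %/ t < n)%N by rewrite ltn_divLR // -EM ltn_ord.
    exists (Ordinal jn) => //; apply: val_inj; rewrite /f val_zs /= -ir addnC -divn_eq.
    by rewrite modn_small.
  by rewrite /f val_zs (modn_small (bnd j)) [(r + _)%N]addnC modnMDl modn_small.
rewrite card_in_imset ?cardsT ?card_ord // => j j' _ _ /(congr1 val).
rewrite /f !val_zs !modn_small ?bnd // => /eqP; rewrite eqn_add2l eqn_pmul2r // => /eqP E.
exact: val_inj.
Qed.

Lemma Dset_nopat m t r : (0 < t)%N -> (t %| m.+1)%N -> nopat t (Dset m t r).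
Proof.
move=> t0 tM; apply/forallP => p; apply/negP => /patP[ltM _ pD h4].
have u1 : p + zs m t \in tpath_verts t p by apply: W_shift.
have u2 : p + zs m t \in Dset m t r.
  move: pD; rewrite !inE /= (modn_dvdm _ tM) (modn_small ltM) modnDr; exact.
move: (h4 _ u1 u2) => /eqP; rewrite -{2}[p]addr0 (inj_eq (addrI p)) => /eqP/(congr1 val).
by rewrite val_zs modn_small //= => E; move: t0; rewrite E.
Qed.

Lemma nopat_Dset m t n (D : {set 'I_m.+1}) p0 :
  (0 < t)%N -> m.+1 = (n * t)%N -> nopat t D -> #|D| = n -> p0 \in D ->
  D = Dset m t (val p0 %% t).
Proof.
move=> t0 EM np cD p0D.
have tM : (t %| m.+1)%N by rewrite EM dvdn_mull.
have iter q : p0 + zs m (q * t) \in D.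
  elim: q => [|q IH]; first by rewrite mul0n zs0 addr0.
  by rewrite mulSn addnC zsD addrA; apply: nopat_closed EM np cD IH.
apply/esym/eqP; rewrite eqEcard cD (card_Dset t0 EM) ?ltn_pmod // leqnn andbT.
apply/subsetP => i; rewrite inE => /eqP ir.
have E := W_decomp p0 i; set x := val (i - p0) in E.
have /dvdnP[q Eq] : (t %| x)%N; last by rewrite E Eq iter.
rewrite /dvdn /x valB (modn_dvdm _ tM).
have le : (p0 <= i + m.+1)%N by apply: leq_trans (ltnW (ltn_ord p0)) (leq_addl _ _).
rewrite -[0%N](mod0n t) -(eqn_modDr p0) subnK // add0n -modnDmr (eqP tM) addn0 ir ?modn_mod eqxx //.
Qed.

Lemma count_exact m t n : (0 < t)%N -> (0 < n)%N -> m.+1 = (n * t)%N ->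
  #|[set D : {set 'I_m.+1} | nopat t D && (#|D| == n)]| = t.
Proof.
move=> t0 n0 EM.
have tM : (t %| m.+1)%N by rewrite EM dvdn_mull.
have tleM : (t <= m.+1)%N by rewrite EM leq_pmull.
have -> : [set D : {set 'I_m.+1} | nopat t D && (#|D| == n)] =
          [set Dset m t (val r) | r in [set: 'I_t]].
  apply/setP => D; rewrite inE; apply/andP/imsetP.
    case=> np /eqP cD.
    have : D != set0 by rewrite -card_gt0 cD.
    case/set0Pn => p0 p0D.
    exists (Ordinal (ltn_pmod p0 t0)); first by rewrite inE.
    exact: nopat_Dset EM np cD p0D.
  case=> r _ ->; split; first exact: Dset_nopat.
  by rewrite (card_Dset t0 EM (ltn_ord r)).
rewrite card_in_imset ?cardsT ?card_ord // => r r' _ _ E.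
have : zs m r \in Dset m t r.
  by rewrite inE val_zs !modn_small // (leq_trans (ltn_ord r) tleM).
rewrite E inE val_zs !modn_small ?(leq_trans (ltn_ord r) tleM) // => /eqP.
exact: val_inj.
Qed.


Local Close Scope ring_scope.

Lemma widen0 (F : nat -> nat) n1 n2 : (n1 <= n2)%N -> (forall j, n1 <= j -> F j = 0)%N ->
  \sum_(j < n1) F j = \sum_(j < n2) F j.
Proof.
move=> le H; rewrite (big_ord_widen n2 F le) big_mkcond /=; apply: eq_bigr => j _.
by case: ifP => // /negbT; rewrite -leqNgt => /H ->.
Qed.

Lemma sum_subsets (T : finType) (U : {set T}) (h : nat -> nat) :
  \sum_(D : {set T} | D \subset U) h #|D| = \sum_(d < #|U|.+1) 'C(#|U|, d) * h d.
Proof.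
rewrite (partition_big (fun D : {set T} => (inord #|D| : 'I_#|U|.+1)) xpredT) //=.
apply: eq_bigr => d _.
have E : forall D : {set T}, (D \subset U) && (inord #|D| == d) = (D \in [set A : {set T} | A \subset U & #|A| == d]).
  move=> D; rewrite inE; case sDU: (D \subset U) => //=.
  have le : (#|D| < #|U|.+1)%N by rewrite ltnS subset_leq_card.
  apply/eqP/eqP => [<-|Ed]; first by rewrite inordK.
  by apply: val_inj; rewrite /= inordK Ed.
rewrite (eq_bigl _ _ E).
rewrite (eq_bigr (fun _ => h d)); last by move=> D; rewrite inE => /andP[_ /eqP ->].
by rewrite sum_nat_const cards_draws.
Qed.

Definition gn (J k s : nat) : nat := if (s <= J)%N then 'C(k, J - s) else 0.

Lemma vander_sub (T : finType) (U : {set T}) c J k : (c <= J)%N ->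
  \sum_(D : {set T} | D \subset U) gn J k (c + #|D|) = 'C(#|U| + k, J - c).
Proof.
move=> cJ; rewrite (sum_subsets U (fun d => gn J k (c + d))) -binomial.Vandermonde.
set a := #|U|; set i := (J - c)%N.
have E d : gn J k (c + d) = if (d <= i)%N then 'C(k, i - d) else 0.
  rewrite /gn /i; have -> : (c + d <= J)%N = (d <= J - c)%N by rewrite leq_subRL.
  by rewrite subnDA.
rewrite (widen0 (n2 := (a + i).+1) (F := fun d => 'C(a, d) * gn J k (c + d))); last 2 first.
- by rewrite ltnS leq_addr.
- by move=> j aj; rewrite bin_small.
rewrite -(widen0 (n1 := i.+1) (n2 := (a + i).+1) (F := fun d => 'C(a, d) * gn J k (c + d))); last 2 first.
- by rewrite ltnS leq_addl.
- by move=> j ij; rewrite E leqNgt ij muln0.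
by apply: eq_bigr => j _; rewrite E -ltnS ltn_ord.
Qed.


Local Open Scope ring_scope.

Definition cz (t i : nat) : int := if (t.+1 %| i)%N then ('C(i, i %/ t.+1))%:Z else 0.

Lemma LT_big t (p : {poly int}) N : (size p <= N)%N ->
  LT t p = \sum_(i < N) p`_i * cz t i.
Proof.
move=> le; rewrite /LT (big_ord_widen N (fun i => p`_i * cz t i) le) big_mkcond /=.
apply: eq_bigr => i _; case: ifP => // /negbT; rewrite -leqNgt => h.
by rewrite nth_default ?mul0r.
Qed.

Lemma LT_add t (p q : {poly int}) : LT t (p + q) = LT t p + LT t q.
Proof.
set N := maxn (size p) (size q).
rewrite (LT_big t (N := N)) ?size_add // (LT_big t (p := p) (N := N)) ?leq_maxl //.
rewrite (LT_big t (p := q) (N := N)) ?leq_maxr // -big_split /=.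
by apply: eq_bigr => i _; rewrite coefD mulrDl.
Qed.

Lemma LT0 t : LT t 0 = 0.
Proof. by rewrite /LT size_poly0 big_ord0. Qed.

Lemma LT_scale t a (p : {poly int}) : LT t (a *: p) = a * LT t p.
Proof.
rewrite (LT_big t (N := size p)) ?size_scale_leq // /LT mulr_sumr.
by apply: eq_bigr => i _; rewrite coefZ mulrA.
Qed.

Lemma LT_sum t (I : finType) (P : pred I) (f : I -> {poly int}) :
  LT t (\sum_(i | P i) f i) = \sum_(i | P i) LT t (f i).
Proof. exact: (big_morph _ (LT_add t) (LT0 t)). Qed.

Lemma LT_Xn t N : LT t 'X^N = cz t N.
Proof.
rewrite /LT size_polyXn big_ord_recr /= coefXn eqxx mul1r big1 ?add0r //.
by move=> i _; rewrite coefXn (ltn_eqF (ltn_ord i)) mul0r.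
Qed.

Definition A t m k : int :=
  \sum_(F : {set 'I_m} | tfamily t F) (-1) ^+ #|F| * cz t ((m - t.+1 * #|F|) + k)%N.

Lemma LT_TT t m n : LT t (Tpoly t m * Tpoly t n) =
  \sum_(G : {set 'I_n} | tfamily t G) (-1) ^+ #|G| * A t m (n - t.+1 * #|G|)%N.
Proof.
rewrite {2}/Tpoly mulr_sumr LT_sum; apply: eq_bigr => G _.
rewrite -scalerAr LT_scale; congr (_ * _).
rewrite /Tpoly mulr_suml LT_sum /A; apply: eq_bigr => F _.
by rewrite -scalerAl LT_scale -exprD LT_Xn.
Qed.


Lemma card_tcover_le m t (F : {set 'I_m.+1}) : tfamily t F -> (t.+1 * #|F| <= m.+1)%N.
Proof.
by move=> hF; rewrite -card_tcover // -[X in (_ <= X)%N](card_ord m.+1) max_card.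
Qed.

Lemma A_formula t m k :
  A t m.+1 k = if (t.+1 %| m.+1 + k)%N then
     \sum_(D : {set 'I_m.+1} | nopat t D) (gn ((m.+1 + k) %/ t.+1) k #|D|)%:R
   else 0.
Proof.
rewrite /A; case: ifP => dv; last first.
  apply: big1 => F hF; rewrite /cz; case: ifP; last by rewrite mulr0.
  move=> dv'; exfalso; move/negbT: dv => /negP; apply.
  have le := card_tcover_le hF.
  have -> : (m.+1 + k = (m.+1 - t.+1 * #|F| + k) + t.+1 * #|F|)%N.
    by rewrite addnAC subnK.
  by rewrite dvdn_add // dvdn_mulr.
set J := ((m.+1 + k) %/ t.+1)%N.
have EJ : (m.+1 + k = J * t.+1)%N by rewrite divnK.
transitivity (\sum_(F : {set 'I_m.+1} | tfamily t F) ((-1 : int) ^+ #|F|) *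
   \sum_(D : {set 'I_m.+1} | D \subset ~: tcover t F) ((gn J k (#|F| + #|D|))%:R : int)).
  apply: eq_bigr => F hF; congr (_ * _).
  have le := card_tcover_le hF.
  have cJ : (#|F| <= J)%N.
    by rewrite -(leq_pmul2r (ltn0Sn t)) -EJ mulnC (leq_trans le) ?leq_addr.
  rewrite -natr_sum vander_sub // cardC_ord card_tcover // natz /cz.
  have E : (m.+1 - t.+1 * #|F| + k = (J - #|F|) * t.+1)%N.
    rewrite mulnBl -EJ [(#|F| * _)%N]mulnC; move: le; set P := (t.+1 * #|F|)%N => /leP le.
    rewrite -!minusE -!plusE; lia.
  by rewrite E dvdn_mull // mulnK.
under eq_bigr => F _ do rewrite mulr_sumr.
rewrite (pair_big_dep (fun F : {set 'I_m.+1} => tfamily t F)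
  (fun F (D : {set 'I_m.+1}) => D \subset ~: tcover t F)
  (fun F (D : {set 'I_m.+1}) => (-1 : int) ^+ #|F| * (gn J k (#|F| + #|D|))%:R)) /=.
rewrite -(sum_FD m t (fun s => (gn J k s)%:R)).
by apply: eq_bigl => FD; rewrite /valid disjoints_subset.
Qed.


Lemma A_zero t m k : (0 < t)%N -> (t * k < m.+1)%N -> A t m.+1 k = 0.
Proof.
move=> t0 ltM; rewrite A_formula; case: ifP => // dv.
apply: big1 => D np.
set J := ((m.+1 + k) %/ t.+1)%N.
have EJ : (m.+1 + k = J * t.+1)%N by rewrite divnK.
suff -> : gn J k #|D| = 0%N by [].
have [->|D0] := eqVneq D set0.
  rewrite cards0 /gn leq0n subn0 bin_small //.
  rewrite -(ltn_pmul2r (ltn0Sn t)) -EJ mulnS.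
  by rewrite mulnC addnC ltn_add2r.
have bnd := nopat_bound t0 np D0.
have h1 : (k < #|D|)%N by rewrite -(ltn_pmul2l t0); exact: leq_trans ltM bnd.
have h2 : (J < #|D|)%N.
  rewrite -(ltn_pmul2r (ltn0Sn t)) -EJ mulnS [(#|D| * t)%N]mulnC.
  move: bnd h1; set X := (t * #|D|)%N => /leP h3 /leP h4; apply/leP.
  rewrite -!plusE; lia.
by rewrite /gn leqNgt h2.
Qed.

Lemma A_exact t m n : (0 < t)%N -> (0 < n)%N -> m.+1 = (n * t)%N ->
  A t m.+1 n = (t.+1)%:Z.
Proof.
move=> t0 n0 EM; rewrite A_formula.
have dv : (m.+1 + n = n * t.+1)%N by rewrite EM mulnS addnC.
rewrite dv dvdn_mull // mulnK //.
have E : forall D : {set 'I_m.+1}, nopat t D ->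
    ((gn n n #|D|)%:R : int) = (D == set0)%:R + (#|D| == n)%:R.
  move=> D np; have [->|D0] := eqVneq D set0.
    by rewrite cards0 /gn leq0n subn0 binn eq_sym (negPf (lt0n_neq0 n0)) addr0.
  have bnd := nopat_bound t0 np D0.
  have nD : (n <= #|D|)%N by rewrite -(leq_pmul2r t0) -EM mulnC.
  rewrite add0r /gn; rewrite leq_eqVlt in nD; case/orP: nD => [/eqP Edn|lt].
    by rewrite -Edn leqnn subnn bin0 eqxx.
  by rewrite leqNgt lt (gtn_eqF lt).
rewrite (eq_bigr _ E) big_split /=.
rewrite (bigD1 set0) /=; last by apply/forallP => i; apply/negP => /patP[_ _]; rewrite in_set0.
rewrite eqxx big1 ?addr0; last by move=> D /andP[_ /negPf ->].
rewrite -natr_sum -big_mkcondr /= sum1_card.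
have -> : #|[pred D : {set 'I_m.+1} | nopat t D && (#|D| == n)]| =
          #|[set D : {set 'I_m.+1} | nopat t D && (#|D| == n)]|.
  by apply: eq_card => D; rewrite !inE.
by rewrite (count_exact t0 n0 EM) -natrD natz add1n.
Qed.


Lemma tfam0 t n : tfamily t (set0 : {set 'I_n}).
Proof. by rewrite /tfamily eqxx orbT /=; apply/forallP => i; rewrite in_set0. Qed.

Unset Implicit Arguments.

Theorem mainTheorem8 (t : nat) (ht : (1 <= t)%N) :
  (forall n m : nat, (n * t < m)%N -> LT t (Tpoly t m * Tpoly t n) = 0) /\
  (forall n : nat, (1 <= n)%N ->
     LT t (Tpoly t (n * t) * Tpoly t n) = (t.+1)%:Z).
Proof.
split.
  move=> n [|m] lt //; rewrite LT_TT big1 // => G hG; rewrite A_zero ?mulr0 //.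
  apply: leq_ltn_trans lt; by rewrite [(n * t)%N]mulnC leq_mul2l leq_subr orbT.
move=> n n0.
have [m Em] : exists m, (n * t)%N = m.+1.
  by exists (n * t).-1; rewrite prednK // muln_gt0 n0.
rewrite Em LT_TT (bigD1 set0) ?tfam0 //= cards0 expr0 mul1r muln0 subn0.
rewrite (A_exact ht n0 (esym Em)) big1 ?addr0 // => G /andP[_ G0].
rewrite A_zero ?mulr0 // -Em [(n * t)%N]mulnC ltn_pmul2l // ltn_subrL n0 andbT muln_gt0 /= card_gt0 G0 //.
Qed.
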